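(* Any Guesser using $m$ bits of memory (regardless of how much randomness or computation she uses) has expected number of correct guesses at most $O(\min\{\ln n, \sqrt{m}\})$ when playing against the random-shuffle Dealer.
   Context: Card guessing game: a deck consists of $n$ distinct cards labeled $1,\dots,n$ and the game lasts $n$ turns. In each turn the Dealer selects a card from the cards still in the deck and places it face down; the Guesser then names a card of $[n]$; the card is revealed and discarded. A guess is correct if it equals the drawn card; the score is the number of correct guesses. A Guesser with $m$ bits of memory keeps a memory state in $\{0,1\}^m$ between turns and consists of a (possibly randomized) guessing function (memory state $\mapsto$ guess) and a (possibly randomized) state-transition function (memory state and revealed card $\mapsto$ new memory state); she may use an unlimited amount of randomness, including random bits she can access repeatedly, which are not counted as memory. The random-shuffle Dealer arranges the deck according to a uniformly random permutation and draws the cards in that order. The expectation is over the randomness of both players. *)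

(* Defs.v *)
From HB Require Import structures.
From mathcomp Require Import all_boot all_order all_algebra all_fingroup.
From mathcomp Require Import all_classical all_reals all_analysis.
Set Implicit Arguments. Unset Strict Implicit. Unset Printing Implicit Defensive.
Import Order.TTheory GRing.Theory Num.Theory.
Local Open Scope ring_scope.

Definition is_dist (R : realType) (T : finType) (p : {ffun T -> R}) : Prop :=
  (forall t, 0 <= p t) /\ \sum_(t : T) p t = 1.

Definition mstate (m : nat) := {ffun 'I_m -> bool}.

(* Her (reusable,
   not-counted) random bits are modelled by a seed drawn once from a
   distribution [g_seed] on a finite seed space S; given the seed, the
   initial memory state, the (randomized) guessing function and the
   (randomized) state-transition function are fixed.  Fresh randomness at
   each use is modelled by the functions returning distributions. *)
Record guesser (R : realType) (n m : nat) (S : finType) := Guesser {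
  g_seed  : {ffun S -> R};
  g_init  : S -> mstate m;
  g_guess : S -> mstate m -> {ffun 'I_n -> R};
  g_trans : S -> mstate m -> 'I_n -> {ffun mstate m -> R}
}.

Definition valid_guesser (R : realType) (n m : nat) (S : finType)
    (G : guesser R n m S) : Prop :=
  is_dist (g_seed G) /\
  (forall r s, is_dist (g_guess G r s)) /\
  (forall r s c, is_dist (g_trans G r s c)).

Section Play.
Variables (R : realType) (n m : nat) (S : finType) (G : guesser R n m S).

Definition step (r : S) (D : {ffun mstate m -> R}) (c : 'I_n)
  : {ffun mstate m -> R} :=
  [ffun s' => \sum_(s : mstate m) D s * g_trans G r s c s'].

Fixpoint exp_score (r : S) (D : {ffun mstate m -> R}) (cs : seq 'I_n) : R :=
  match cs with
  | [::] => 0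
  | c :: cs' =>
      \sum_(s : mstate m) D s * g_guess G r s c + exp_score r (step r D c) cs'
  end.

Definition deck (sigma : {perm 'I_n}) : seq 'I_n :=
  [seq sigma i | i <- enum 'I_n].

Definition point_dist (s0 : mstate m) : {ffun mstate m -> R} :=
  [ffun s => (s == s0)%:R].

Definition expected_score_random_shuffle : R :=
  \sum_(r : S) g_seed G r *
    ((n`!%:R)^-1 *
     \sum_(sigma : {perm 'I_n}) exp_score r (point_dist (g_init G r)) (deck sigma)).

End Play.

(* Main.v *)
Require Import Defs.
From HB Require Import structures.
From mathcomp Require Import all_boot all_order all_algebra all_fingroup.
From mathcomp Require Import all_classical all_reals all_analysis.
From mathcomp Require Import ring lra.
Import Order.TTheory GRing.Theory Num.Theory.
Local Open Scope ring_scope.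
Set Implicit Arguments. Unset Strict Implicit. Unset Printing Implicit Defensive.

Section AVsec.
Variables (R : realType) (T : eqType).

Definition SP (L : seq T) (f : seq T -> R) := \sum_(t <- permutations L) f t.
Definition AV (L : seq T) (f : seq T -> R) := ((size L)`!%:R)^-1 * SP L f.

Lemma SP_rec L f : uniq L -> (0 < size L)%N ->
  SP L f = \sum_(x <- L) SP (rem x L) (fun t => f (x :: t)).
Proof.
move=> uL sL; rewrite /SP (perm_big _ (permutationsE sL)) big_allpairs_dep.
by rewrite undup_id.
Qed.

Lemma AV_rec L f : uniq L -> (0 < size L)%N ->
  AV L f = (size L)%:R^-1 * \sum_(x <- L) AV (rem x L) (fun t => f (x :: t)).
Proof.
move=> uL sL; rewrite /AV SP_rec // mulr_sumr mulr_sumr big_seq [RHS]big_seq.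
apply: eq_bigr => x xL; rewrite size_rem //.
case: (size L) sL => // k _ /=; rewrite factS natrM invfM.
by rewrite mulrA.
Qed.

Lemma AV_nil f : AV [::] f = f [::].
Proof. by rewrite /AV /SP /= big_cons big_nil addr0 invr1 mul1r. Qed.

Lemma AV_le L f g : (forall t, perm_eq t L -> f t <= g t) -> AV L f <= AV L g.
Proof.
move=> H; rewrite /AV ler_wpM2l ?invr_ge0 ?ler0n // /SP big_seq [X in _ <= X]big_seq.
by apply: ler_sum => t; rewrite mem_permutations; apply: H.
Qed.

Lemma AV_eq L f g : (forall t, perm_eq t L -> f t = g t) -> AV L f = AV L g.
Proof.
move=> H; rewrite /AV /SP; congr (_ * _); rewrite big_seq [RHS]big_seq.
by apply: eq_bigr => t; rewrite mem_permutations; apply: H.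
Qed.

Lemma AV_const L c : uniq L -> AV L (fun _ => c) = c.
Proof.
move=> uL; rewrite /AV /SP big_const_seq.
rewrite -[X in iter X _ _]count_predT count_predT size_permutations //.
have -> : forall k, iter k (+%R c) 0 = c *+ k.
  by elim => [|k IH] //=; rewrite IH mulrS.
rewrite -[c *+ _]mulr_natl mulrA mulVf ?mul1r // pnatr_eq0 -lt0n fact_gt0 //.
Qed.

Lemma AV_add L f g : AV L (fun t => f t + g t) = AV L f + AV L g.
Proof. by rewrite /AV /SP big_split mulrDr. Qed.

Lemma AV_scale L c f : AV L (fun t => c * f t) = c * AV L f.
Proof. by rewrite /AV /SP -mulr_sumr mulrCA. Qed.

Lemma AV_sum (I : Type) (r : seq I) L (F : I -> seq T -> R) :
  AV L (fun t => \sum_(i <- r) F i t) = \sum_(i <- r) AV L (F i).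
Proof. by rewrite /AV /SP exchange_big mulr_sumr. Qed.

Lemma AV_ge0 L f : (forall t, 0 <= f t) -> 0 <= AV L f.
Proof. by move=> H; rewrite /AV mulr_ge0 ?invr_ge0 ?ler0n // sumr_ge0. Qed.

End AVsec.

Lemma deck_inj n : injective (@deck n).
Proof.
move=> s1 s2 /eq_in_map H; apply/permP => i; apply: H; exact: mem_enum.
Qed.

Lemma deck_perm_eq n : perm_eq [seq deck s | s <- index_enum {perm 'I_n}] (permutations (enum 'I_n)).
Proof.
apply: uniq_perm; first by rewrite map_inj_uniq ?index_enum_uniq //; exact: deck_inj.
  exact: permutations_uniq.
move=> t; rewrite mem_permutations; apply/mapP/idP.
  move=> [s _ ->]; apply: uniq_perm; first by rewrite map_inj_uniq ?enum_uniq //; exact: perm_inj.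
    exact: enum_uniq.
  move=> x; rewrite mem_enum; apply/mapP; exists (s^-1 x)%g; rewrite ?mem_enum ?permKV //.
move=> pt; have st : size t == n by rewrite (perm_size pt) size_enum_ord.
pose tt := Tuple st.
have ut : uniq tt by rewrite (perm_uniq pt) enum_uniq.
have inj : injective (tnth tt) by apply/tuple_uniqP.
exists (perm inj); first by rewrite mem_index_enum.
rewrite /deck -[LHS](map_tnth_enum tt); apply: eq_map => i; by rewrite permE.
Qed.

Lemma sum_deck (R : realType) n (f : seq 'I_n -> R) :
  \sum_(s : {perm 'I_n}) f (deck s) = \sum_(t <- permutations (enum 'I_n)) f t.
Proof.
by rewrite -(perm_big _ (deck_perm_eq n)) big_map.
Qed.

Section Num.
Variable R : realType.

Lemma le_ln_of_exp (x y : R) : 0 < y -> expR x <= y -> x <= ln y.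
Proof. by move=> y0 h; rewrite -ler_expR lnK. Qed.

Lemma exp_inv_bound (t : R) : 0 <= t -> expR t * (1 - t) <= 1.
Proof.
move=> t0; have h := expR_ge1Dx (- t).
have e : expR t * expR (- t) = 1 by rewrite -expRD subrr expR0.
by rewrite -[X in _ <= X]e ler_wpM2l ?expR_ge0.
Qed.

Lemma harm_exp (j r : nat) : (0 < r)%N ->
  expR (\sum_(i < j) ((j + r - i)%:R)^-1 : R) <= (j + r)%:R / r%:R.
Proof.
move=> r0; have rp : 0 < r%:R :> R by rewrite ltr0n.
elim: j => [|j IH].
  by rewrite big_ord0 expR0 add0n divff // gt_eqF.
rewrite big_ord_recl subn0 expRD.
rewrite (eq_bigr (fun i : 'I_j => ((j + r - i)%:R)^-1)); last first.
  by move=> i _; rewrite lift0 addSn subSS.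
set N := (j + r)%N.
have -> : (j.+1 + r)%N = N.+1 by rewrite addSn.
apply: (@le_trans _ _ (expR (N.+1%:R^-1) * (N%:R / r%:R))).
  by rewrite ler_wpM2l ?expR_ge0.
rewrite mulrA ler_wpM2r ?invr_ge0 ?ler0n //.
have Np : 0 < N.+1%:R :> R by rewrite ltr0n.
have t0 : 0 <= (N.+1%:R : R)^-1 by rewrite invr_ge0 ler0n.
have h := exp_inv_bound t0.
have -> : (N%:R : R) = N.+1%:R * (1 - N.+1%:R^-1).
  by rewrite mulrBr mulr1 mulfV ?gt_eqF // -natr1 addrK.
by rewrite mulrCA; apply: ler_piMr => //; apply: ltW.
Qed.

Lemma ln2_ge : 1 / 3 <= ln (2 : R).
Proof.
apply: le_ln_of_exp => //.
have t0 : 0 <= (1 / 3 : R) by rewrite divr_ge0.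
have h := exp_inv_bound t0.
have e0 := expR_gt0 (1 / 3 : R).
set e := expR (1 / 3) in h e0 *.
nra.
Qed.

End Num.

Lemma minr_l (R : realType) (x y : R) : x <= y -> Num.min x y = x.
Proof. by move=> h; rewrite /Num.min; case: ltgtP h => // hyx; rewrite leNgt hyx. Qed.
Lemma minr_r (R : realType) (x y : R) : y < x -> Num.min x y = y.
Proof. by move=> h; rewrite /Num.min; case: ltgtP h => // hyx; rewrite ltNge ltW. Qed.

Lemma jensen_exp (R : realType) (I : Type) (r : seq I) (wt x : I -> R) :
  (forall i, 0 <= wt i) -> \sum_(i <- r) wt i = 1 ->
  expR (\sum_(i <- r) wt i * x i) <= \sum_(i <- r) wt i * expR (x i).
Proof.
move=> w0 w1; set mu := \sum_(i <- r) wt i * x i.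
have H y : expR mu * (1 + (y - mu)) <= expR y.
  rewrite -[in X in _ <= X](subrK mu y) expRD mulrC ler_wpM2r ?expR_ge0 //.
  exact: expR_ge1Dx.
apply: (@le_trans _ _ (\sum_(i <- r) wt i * (expR mu * (1 + (x i - mu))))).
  rewrite (eq_bigr (fun i => expR mu * (wt i + (wt i * x i - mu * wt i)))); last first.
    by move=> i _; ring.
  rewrite -mulr_sumr big_split /= sumrB -mulr_sumr w1 -/mu mulr1 subrr addr0 mulr1.
  by [].
by apply: ler_sum => i _; apply: ler_wpM2l.
Qed.

Lemma rem_comm (T : eqType) (L : seq T) x y : uniq L -> rem x (rem y L) = rem y (rem x L).
Proof.
move=> uL; rewrite !rem_filter ?rem_uniq // ?filter_uniq // -!filter_predI.
by apply: eq_filter => z /=; rewrite andbC.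
Qed.

Lemma pair_swap (R : realType) (T : eqType) (L : seq T) (F : T -> T -> R) : uniq L ->
  \sum_(y <- L) \sum_(x <- rem y L) F x y = \sum_(x <- L) \sum_(y <- rem x L) F x y.
Proof.
move=> uL.
under eq_bigr do rewrite rem_filter // big_filter.
under [RHS]eq_bigr do rewrite rem_filter // big_filter.
rewrite [LHS](eq_bigr (fun i => \sum_(i0 <- L) if i0 != i then F i0 i else 0)); last first.
  by move=> i _; rewrite big_mkcond.
rewrite exchange_big; apply: eq_bigr => x _; rewrite [RHS]big_mkcond.
by apply: eq_bigr => y _ /=; rewrite eq_sym.
Qed.

Section Guess.
Variables (R : realType) (n m : nat) (S : finType) (G : guesser R n m S) (w : S).
Hypothesis Hq : forall s, is_dist (g_guess G w s).
Hypothesis HT : forall s c, is_dist (g_trans G w s c).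

Definition q (s : mstate m) (c : 'I_n) : R := g_guess G w s c.
Definition Tr (s : mstate m) (c : 'I_n) (s' : mstate m) : R := g_trans G w s c s'.

Fixpoint E1 (s : mstate m) (p : seq 'I_n) : R :=
  match p with
  | [::] => 0
  | c :: p' => q s c + \sum_(s' : mstate m) Tr s c s' * E1 s' p'
  end.

Lemma exp_scoreE D p : exp_score G w D p = \sum_(s : mstate m) D s * E1 s p.
Proof.
elim: p D => [|c p IH] D /=; first by rewrite big1 // => s _; rewrite mulr0.
rewrite IH /step; under [X in _ + X = _]eq_bigr do rewrite ffunE mulr_suml.
rewrite exchange_big /= -big_split /=; apply: eq_bigr => s _.
by rewrite mulrDr mulr_sumr; congr (_ + _); apply: eq_bigr => s' _; rewrite mulrA.
Qed.

Definition after D p := foldl (step G w) D p.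

Lemma exp_score_cat D p1 p2 :
  exp_score G w D (p1 ++ p2) = exp_score G w D p1 + exp_score G w (after D p1) p2.
Proof.
by elim: p1 D => [|c p1 IH] D /=; rewrite ?add0r // IH addrA.
Qed.

Lemma step_dist D c : is_dist D -> is_dist (step G w D c).
Proof.
move=> [D0 D1]; split.
  by move=> s'; rewrite ffunE sumr_ge0 // => s _; rewrite mulr_ge0 //; case: (HT s c).
rewrite (eq_bigr (fun s2 => \sum_s D s * Tr s c s2)); last by move=> s2 _; rewrite ffunE.
rewrite exchange_big /= -D1; apply: eq_bigr => s _.
by rewrite -mulr_sumr; case: (HT s c) => _ ->; rewrite mulr1.
Qed.

Lemma after_dist D p : is_dist D -> is_dist (after D p).
Proof. by elim: p D => [|c p IH] D //= HD; apply: IH; apply: step_dist. Qed.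

Lemma q_ge0 s c : 0 <= q s c.
Proof. by case: (Hq s) => H _; apply: H. Qed.

Lemma Tr_ge0 s c s' : 0 <= Tr s c s'.
Proof. by case: (HT s c) => H _; apply: H. Qed.

Lemma sum_Tr s c : \sum_(s' : mstate m) Tr s c s' = 1.
Proof. by case: (HT s c). Qed.

Lemma sum_q_le s L : uniq L -> \sum_(x <- L) q s x <= 1.
Proof.
move=> uL; rewrite big_uniq //; case: (Hq s) => _ <-.
rewrite [X in _ <= X](bigID (fun x => x \in L)) /= lerDl sumr_ge0 // => x _.
exact: q_ge0.
Qed.

Lemma harm L j D : uniq L -> (j <= size L)%N -> is_dist D ->
  AV L (fun p => exp_score G w D (take j p)) <= \sum_(i < j) ((size L - i)%:R)^-1.
Proof.
elim: j L D => [|j IH] L D uL jL HD.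
  by rewrite big_ord0 (AV_eq (g := fun _ => 0)) ?AV_const // => t _; rewrite take0.
rewrite AV_rec //; last by apply: leq_ltn_trans jL.
have sL : size L = (size L).-1.+1 by rewrite prednK //; apply: leq_ltn_trans jL.
rewrite big_ord_recl subn0.
under eq_bigr do rewrite /= AV_add AV_const ?rem_uniq //.
rewrite big_split /= mulrDr lerD //.
  rewrite ler_piMr ?invr_ge0 ?ler0n //.
  rewrite exchange_big /= -[X in _ <= X](proj2 HD) ler_sum // => s _.
  rewrite -mulr_sumr ler_piMr //; last by apply: sum_q_le.
  by case: HD => H _; apply: H.
set H' := \sum_(i < j) ((size L - bump 0 i)%:R)^-1.
apply: (@le_trans _ _ ((size L)%:R^-1 * \sum_(x <- L) H')).
  rewrite ler_wpM2l ?invr_ge0 ?ler0n // big_seq [X in _ <= X]big_seq ler_sum // => x xL.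
  apply: le_trans (IH _ _ (rem_uniq _ uL) _ (step_dist _ HD)) _.
    by rewrite size_rem // -ltnS -sL.
  rewrite size_rem //; apply: ler_sum => i _.
  by rewrite /bump /= -subn1 -subnDA.
rewrite [X in X <= _](_ : _ = H') //.
rewrite big_const_seq.
have -> : forall k (c : R), iter k (+%R c) 0 = c *+ k.
  by move=> k c; elim: k => [|k IHk] //=; rewrite IHk mulrS.
by rewrite count_predT -[H' *+ _]mulr_natl mulrA mulVf ?mul1r // pnatr_eq0 sL.
Qed.

Lemma q_le1 s c : q s c <= 1.
Proof. by have := @sum_q_le s [:: c] isT; rewrite big_seq1. Qed.

Fixpoint R1 (a : R) (s : mstate m) (p : seq 'I_n) : R :=
  match p with
  | [::] => 1
  | c :: p' => (1 + a * q s c) * \sum_(s' : mstate m) Tr s c s' * R1 a s' p'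
  end.

Lemma R1_ge0 a s p : 0 <= a -> 0 <= R1 a s p.
Proof.
move=> a0; elim: p s => [|c p IH] s /=; first exact: ler01.
rewrite mulr_ge0 ?addr_ge0 ?mulr_ge0 ?q_ge0 // sumr_ge0 // => s' _.
by rewrite mulr_ge0 ?Tr_ge0.
Qed.

Lemma exp_convex (lam x : R) : 0 <= x -> x <= 1 -> expR (lam * x) <= 1 + (expR lam - 1) * x.
Proof.
move=> x0 x1.
have := @jensen_exp R bool [:: true; false] (fun b => if b then x else 1 - x)
  (fun b => if b then lam else 0).
rewrite !big_cons !big_nil /= !addr0 mulr0 addr0 expR0 mulr1 => H.
rewrite mulrC; apply: le_trans (H _ _) _.
- by case; rewrite ?subr_ge0.
- by rewrite subrKC.
- by rewrite le_eqVlt; apply/orP; left; apply/eqP; ring.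
Qed.

Lemma E1_R1 lam s p : 0 <= lam -> expR (lam * E1 s p) <= R1 (expR lam - 1) s p.
Proof.
move=> l0; elim: p s => [|c p IH] s /=; first by rewrite mulr0 expR0.
rewrite mulrDr expRD ler_pM ?expR_ge0 //; first exact: exp_convex (q_ge0 _ _) (q_le1 _ _).
rewrite mulr_sumr (eq_bigr (fun s' => Tr s c s' * (lam * E1 s' p))); last first.
  by move=> s' _; rewrite mulrCA.
apply: le_trans (jensen_exp _ (Tr_ge0 s c) (sum_Tr s c)) _.
by apply: ler_sum => s' _; apply: ler_wpM2l; [exact: Tr_ge0 | exact: IH].
Qed.

Lemma R1_exch a s j L : uniq L -> (j < size L)%N ->
  AV L (fun p => R1 a s (drop j p)) = (size L)%:R^-1 * \sum_(x <- L)
    ((1 + a * q s x) * \sum_(s' : mstate m) Tr s x s' * AV (rem x L) (fun p => R1 a s' (drop j p))).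
Proof.
elim: j L s => [|j IH] L s uL jL.
  rewrite AV_rec //; congr (_ * _); apply: eq_bigr => x _ /=.
  rewrite AV_scale AV_sum; congr (_ * _); apply: eq_bigr => s' _.
  rewrite AV_scale; congr (_ * _); congr (AV _ _); apply: funext => p.
  by rewrite drop0.
have k1 : (1 < size L)%N by apply: leq_ltn_trans jL.
have k0 : (0 < size L)%N by apply: ltnW.
set F := fun x y => (1 + a * q s x) * \sum_(s' : mstate m) Tr s x s' *
     AV (rem x (rem y L)) (fun p => R1 a s' (drop j p)).
transitivity ((size L)%:R^-1 * ((size L).-1%:R^-1 * \sum_(y <- L) \sum_(x <- rem y L) F x y)).
  rewrite AV_rec //; congr (_ * _); rewrite mulr_sumr big_seq [RHS]big_seq.
  apply: eq_bigr => y yL /=; rewrite IH ?rem_uniq // ?size_rem //; last first.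
    by rewrite -ltnS prednK.
rewrite pair_swap //; congr (_ * _); rewrite mulr_sumr big_seq [RHS]big_seq.
apply: eq_bigr => x xL; rewrite /F -mulr_sumr mulrCA; congr (_ * _).
rewrite exchange_big mulr_sumr; apply: eq_bigr => s' _.
rewrite -mulr_sumr mulrCA; congr (_ * _).
rewrite (AV_rec _ (rem_uniq _ uL)) ?size_rem //; last by rewrite -ltnS prednK.
congr (_ * _); apply: eq_bigr => y _.
by rewrite (rem_comm _ _ uL).
Qed.

Lemma R1_bound a s r j L : 0 <= a -> uniq L -> size L = (j + r)%N ->
  AV L (fun p => R1 a s (drop j p)) <= (1 + a / (j.+1)%:R) ^+ r.
Proof.
move=> a0; elim: r L s => [|r IH] L s uL sL.
  rewrite expr0 (AV_eq (g := fun _ => 1)) ?AV_const // => t pt.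
  by rewrite drop_oversize // (perm_size pt) sL addn0.
have jL : (j < size L)%N by rewrite sL addnS ltnS leq_addr.
set B := 1 + a / (j.+1)%:R.
have B0 : 0 <= B by rewrite addr_ge0 ?divr_ge0.
rewrite R1_exch //.
apply: (@le_trans _ _ ((size L)%:R^-1 * \sum_(x <- L) ((1 + a * q s x) * B ^+ r))).
  rewrite ler_wpM2l ?invr_ge0 ?ler0n // big_seq [X in _ <= X]big_seq ler_sum // => x xL.
  rewrite ler_wpM2l ?addr_ge0 ?mulr_ge0 ?q_ge0 //.
  rewrite -[X in _ <= X]mul1r -(sum_Tr s x) mulr_suml ler_sum // => s' _.
  rewrite ler_wpM2l ?Tr_ge0 // IH ?rem_uniq // size_rem // sL.
  by rewrite addnS.
rewrite -mulr_suml mulrA exprSr [_ * B]mulrC ler_wpM2r ?exprn_ge0 //.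
rewrite big_split /= -mulr_sumr.
have -> : \sum_(x <- L) (1 : R) = (size L)%:R.
  by rewrite big_const_seq count_predT; elim: (size L) => [|k IHk] //=; rewrite IHk -natr1 addrC.
have kp : 0 < (size L)%:R :> R by rewrite ltr0n; apply: leq_ltn_trans jL.
rewrite mulrDr mulVf ?gt_eqF // lerD2l.
apply: (@le_trans _ _ ((size L)%:R^-1 * a)).
  by rewrite ler_wpM2l ?invr_ge0 ?ler0n // ler_piMr // sum_q_le.
rewrite mulrC ler_wpM2l // lef_pV2 ?posrE ?ltr0n ?ler_nat //; by apply: leq_ltn_trans jL.
Qed.

Lemma dist_le1 (D : {ffun mstate m -> R}) s : is_dist D -> D s <= 1.
Proof.
case=> D0 D1; rewrite -D1 (bigD1 s) //= lerDl sumr_ge0 // => s' _.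
Qed.

Lemma card_mstate : #|{: mstate m}| = (2 ^ m)%N.
Proof. by rewrite card_ffun card_bool card_ord. Qed.

Lemma tail_bound lam D r j L : 0 <= lam -> uniq L -> size L = (j + r)%N -> is_dist D ->
  expR (lam * AV L (fun p => exp_score G w (after D (take j p)) (drop j p)))
  <= (2 ^ m)%:R * (1 + (expR lam - 1) / (j.+1)%:R) ^+ r.
Proof.
move=> l0 uL sL HD.
have a0 : 0 <= expR lam - 1.
  by rewrite subr_ge0; apply: le_trans (expR_ge1Dx lam); rewrite lerDl.
set a := expR lam - 1.
set c := ((size L)`!%:R : R)^-1.
have c0 : 0 <= c by rewrite invr_ge0 ler0n.
set W := fun t => after D (take j t).
have HW t : is_dist (W t) by apply: after_dist.
set ix := [seq (t, s) | t <- permutations L, s <- index_enum (mstate m)].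
have E : lam * AV L (fun p => exp_score G w (after D (take j p)) (drop j p)) =
  \sum_(i <- ix) (c * W i.1 i.2) * (lam * E1 i.2 (drop j i.1)).
  rewrite big_allpairs /AV /SP -/c mulrA mulr_sumr; apply: eq_bigr => t _ /=.
  rewrite exp_scoreE big_distrr /=; apply: eq_bigr => s _ /=.
  by rewrite -/(W t); ring.
rewrite E; apply: le_trans (jensen_exp _ _ _) _.
- by case=> t s; rewrite mulr_ge0 //; case: (HW t) => H _; apply: H.
- rewrite big_allpairs /= -[RHS](@mulVf _ ((size L)`!%:R)); last first.
    by rewrite pnatr_eq0 -lt0n fact_gt0.
  rewrite mulrC -/c (eq_bigr (fun _ => c)); last first.
    by move=> t _; rewrite -mulr_sumr; case: (HW t) => _ ->; rewrite mulr1.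
  rewrite big_const_seq count_predT size_permutations //.
  have -> : forall k (x : R), iter k (+%R x) 0 = x *+ k.
    by move=> k x; elim: k => [|k IHk] //=; rewrite IHk mulrS.
  by rewrite mulr_natl.
rewrite big_allpairs.
apply: (@le_trans _ _ (\sum_(s : mstate m) AV L (fun t => R1 a s (drop j t)))).
  rewrite exchange_big /=; apply: ler_sum => s _.
  rewrite /AV /SP -/c mulr_sumr; apply: ler_sum => t _.
  rewrite -mulrA ler_wpM2l //.
  apply: (@le_trans _ _ (expR (lam * E1 s (drop j t)))); last exact: E1_R1.
  rewrite ler_piMl ?expR_ge0 //; exact: dist_le1.
apply: (@le_trans _ _ (\sum_(s : mstate m) (1 + a / (j.+1)%:R) ^+ r)).
  by apply: ler_sum => s _; apply: R1_bound.
by rewrite sumr_const card_mstate mulr_natl.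
Qed.

Lemma split_score D j L : AV L (exp_score G w D) =
  AV L (fun p => exp_score G w D (take j p)) +
  AV L (fun p => exp_score G w (after D (take j p)) (drop j p)).
Proof.
by rewrite -AV_add; apply: AV_eq => t _; rewrite -{1}(cat_take_drop j t) exp_score_cat.
Qed.

Lemma score_bound D : (2 <= n)%N -> (1 <= m)%N -> is_dist D ->
  AV (enum 'I_n) (exp_score G w D) <= 4 * Num.min (ln (n%:R : R)) (Num.sqrt (m%:R : R)).
Proof.
move=> n2 m1 HD.
have n1 : (0 < n)%N by apply: (leq_trans _ n2).
set L := enum 'I_n.
have uL : uniq L := enum_uniq _.
have sL : size L = n := size_enum_ord n.
set lam := Num.sqrt (m%:R : R).
have l1 : 1 <= lam by rewrite -sqrtr1 ler_sqrt ?ler0n // ler1n.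
have lm : lam ^+ 2 = m%:R by rewrite sqr_sqrtr ?ler0n.
have n0 : 0 < n%:R :> R by rewrite ltr0n; exact: n1.
case: (leP (ln (n%:R : R)) lam) => [hA | hB].

  have t0 : AV L (fun p => exp_score G w (after D (take n p)) (drop n p)) = 0.
    rewrite (AV_eq (g := fun _ => 0)) ?AV_const // => t pt.
    by rewrite drop_oversize // (perm_size pt) sL.
  rewrite (split_score D n L) t0 addr0.
  apply: le_trans (harm uL _ HD) _; first by rewrite sL.
  rewrite sL.
  have ln2 : 1 / 3 <= ln (n%:R : R).
    apply: le_trans (ln2_ge R) _.
    rewrite ler_ln ?posrE ?ltr0n ?(ler_nat R 2 n) //; exact: n1.
  have [n' en] : exists n', n = n'.+1 by exists n.-1; rewrite prednK //; exact: n1.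
  rewrite en big_ord_recr /= subSnn invr1.
  have h := @harm_exp R n' 1 isT.
  rewrite (eq_bigr (fun i : 'I_n' => ((n' + 1 - i)%:R)^-1)) ?addn1 //.
  have h2 : \sum_(i < n') ((n'.+1 - i)%:R : R)^-1 <= ln (n'.+1%:R).
    by apply: le_ln_of_exp; rewrite ?ltr0n // -addn1 (le_trans h) // divr1.
  rewrite -en; rewrite -en in h2; lra.

set x := n%:R * expR (- lam).
have x0 : 0 <= x by rewrite mulr_ge0 ?ler0n ?expR_ge0.
set r := Num.truncn x.
have /andP [rle rgt] := Num.Theory.truncn_itv x0.
have el : expR lam < n%:R by rewrite -[X in _ < X](lnK n0) ltr_expR.
have e0 := expR_gt0 lam.
have eN : expR (- lam) * expR lam = 1 by rewrite -expRD addNr expR0.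
have x1 : 1 <= x.
  by rewrite /x -[X in X <= _]eN mulrC ler_wpM2r ?expR_ge0 // ltW.
have r1 : (0 < r)%N by rewrite Num.Theory.truncn_gt0.
have rx : r%:R * expR lam <= n%:R.
  by apply: le_trans (ler_wpM2r (ltW e0) rle) _; rewrite /x -mulrA eN mulr1.
have E1 : 1 <= expR lam by apply: le_trans (expR_ge1Dx lam); rewrite lerDl ltW // (lt_le_trans ltr01 l1).
have rn : (r <= n)%N.
  by rewrite -(ler_nat R); apply: le_trans rx; rewrite ler_peMr ?ler0n.
set j := (n - r)%N.
have nj : n = (j + r)%N by rewrite subnK.
rewrite (split_score D j L).
have hF : AV L (fun p => exp_score G w D (take j p)) <= 1 + lam.
  apply: le_trans (harm uL _ HD) _; first by rewrite sL leq_subr.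
  rewrite sL; have := @harm_exp R j r r1; rewrite -nj => hh.
  rewrite -ler_expR; apply: le_trans hh _.
  rewrite expRD ler_pdivrMr ?ltr0n //.
  have nlt : n%:R <= r.+1%:R * expR lam.
    by have := ler_wpM2r (ltW e0) (ltW rgt); rewrite /x -mulrA eN mulr1.
  have e1 : 2 <= expR (1 : R) by apply: le_trans (expR_ge1Dx 1).
  have rge : 1 <= r%:R :> R by rewrite ler1n.
  have h2 : r.+1%:R <= expR 1 * r%:R :> R by rewrite -natr1; nra.
  apply: le_trans nlt _.
  by rewrite mulrAC ler_wpM2r ?expR_ge0.
have hT := @tail_bound lam D r j L (ltW (lt_le_trans ltr01 l1)) uL (etrans sL nj) HD.
set mu := AV L _ in hT *.
have hE : (2 ^ m)%:R * (1 + (expR lam - 1) / j.+1%:R) ^+ r <= expR (m%:R + 1).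
  have a0 : 0 <= expR lam - 1 by rewrite subr_ge0.
  have b0 : 0 <= 1 + (expR lam - 1) / j.+1%:R by rewrite addr_ge0 ?divr_ge0.
  rewrite expRD ler_pM ?ler0n ?exprn_ge0 //.
    rewrite -[m%:R]mulr1 expRM_natl natrX; apply: lerXn2r; rewrite ?nnegrE ?expR_ge0 //.
    by apply: le_trans (expR_ge1Dx 1).
  apply: (@le_trans _ _ (expR ((expR lam - 1) / j.+1%:R) ^+ r)).
    by apply: lerXn2r; rewrite ?nnegrE ?expR_ge0 // expR_ge1Dx.
  rewrite -expRM_natl ler_expR mulrA ler_pdivrMr ?ltr0n // mul1r.
  have jr : j.+1%:R = n%:R - r%:R + 1 :> R by rewrite -natr1 /j natrB.
  rewrite jr; nra.
have hmu : lam * mu <= m%:R + 1 by rewrite -ler_expR; apply: le_trans hT hE.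
rewrite -lm in hmu.
nra.
Qed.

End Guess.

Lemma point_dist_dist (R : realType) m (s0 : mstate m) : is_dist (point_dist R s0).
Proof.
split; first by move=> s; rewrite ffunE ler0n.
rewrite (bigD1 s0) //= ffunE eqxx big1 ?addr0 // => s /negbTE hs.
by rewrite ffunE hs.
Qed.

Unset Implicit Arguments.

Theorem mainTheorem5 (R : realType) :
  exists C : R, 0 < C /\
    forall (n m : nat) (S : finType) (G : guesser R n m S),
      (2 <= n)%N -> (1 <= m)%N -> valid_guesser G ->
      expected_score_random_shuffle G
        <= C * Num.min (ln (n%:R : R)) (Num.sqrt (m%:R : R)).
Proof.
exists 4; split; first by rewrite ltr0n.
move=> n m S G n2 m1 [[s0 s1] [Hq HT]].
rewrite /expected_score_random_shuffle.
set B := 4 * Num.min _ _.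
apply: (@le_trans _ _ (\sum_(r : S) g_seed G r * B)); last first.
  by rewrite -mulr_suml s1 mul1r.
apply: ler_sum => r _; apply: ler_wpM2l => //.
rewrite sum_deck.
have -> : (n`!%:R)^-1 * \sum_(t <- permutations (enum 'I_n))
    exp_score G r (point_dist R (g_init G r)) t =
    AV (enum 'I_n) (exp_score G r (point_dist R (g_init G r))).
  by rewrite /AV /SP size_enum_ord.
apply: score_bound => //; exact: point_dist_dist.
Qed.
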